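(* Let $X$ be a non-empty set. The monoid $T_X^0$ is protomodal, and for every maximal right pre-reduced subset $E\subseteq E(T_X^0)$, $T_X^0$ is an inductive left $E$-monoid, integral with $0\in E$, and $(PT_X,\cdot,D)\cong Rest_0(E,T_X^0)$ as unary semigroups.
   Context: All maps are composed left to right: for (partial) maps $s,t$ on $X$, $st$ means apply $s$ first, then $t$. $PT_X$ is the monoid of partial functions $X\to X$ under this composition, with $D(s)$ the identity map on $\mathrm{dom}(s)$; it is a left restriction monoid. $T_X$ is the submonoid of total functions, and $T_X^0$ is $T_X$ with a new zero element $0$ adjoined. For a semigroup $S$, $E(S)$ is its set of idempotents and $Sf=\{uf\mid u\in S\}$; for $e,f\in E(S)$, $e\le_r f$ iff $e=ef$, and $e\sim_r f$ iff $e\le_r f$ and $f\le_r e$. $E\subseteq E(S)$ is right pre-reduced if $e=ef$ and $f=fe$ imply $e=f$ for $e,f\in E$, and maximal right pre-reduced if it contains exactly one element of each $\sim_r$-class of $E(S)$. $Eq(s,t)=\{u\in S\mid us=ut\}$. A monoid $S$ is protomodal if for every $e\in E(S)$ and $s\in S$, $Eq(s,se)$ is non-empty and equals $Sf$ for some $f\in E(S)$. A monoid with zero is integral if $st=0$ implies $s=0$ or $t=0$. Let $S$ be a monoid and $1\in E\subseteq E(S)$. $S$ is an inductive left $E$-monoid if $E$ is right pre-reduced, $(E,\le_r)$ is a meet-semilattice with meet $\wedge$, and (I1') for all $t\in S$, $e\in E$ there is $t\cdot e\in E$ such that for all $s\in S$: $ste=st$ iff $s(t\cdot e)=s$; (I2')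 for $s\in S$, $e,f\in E$: $se=sf=s$ implies $s(e\wedge f)=s$. If $S$ is also integral with zero and $0\in E$, $Rest_0(E,S)$ is the set $\{(e,s)\in E\times S\mid es=s,\ s=0\Rightarrow e=0\}$ with multiplication $(e,s)(f,t)=(e\wedge(s\cdot f),(e\wedge(s\cdot f))st)$ and $D((e,s))=(e,e)$. *)

(* Defs.v *)
Set Implicit Arguments.

(** * Generic notions for a monoid (S, mul, one), maps composed left to right *)
Section Generic.
Variable S : Type.
Variable mul : S -> S -> S.

Definition idem (e : S) : Prop := mul e e = e.

Definition le_r (e f : S) : Prop := e = mul e f.

Definition sim_r (e f : S) : Prop := le_r e f /\ le_r f e.

Definition right_pre_reduced (E : S -> Prop) : Prop :=
  forall e f, E e -> E f -> e = mul e f -> f = mul f e -> e = f.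

Definition max_right_pre_reduced (E : S -> Prop) : Prop :=
  (forall e, E e -> idem e) /\
  (forall e, idem e -> exists! f, E f /\ sim_r f e).

Definition in_Eq (s t u : S) : Prop := mul u s = mul u t.

Definition in_Sf (f u : S) : Prop := exists v, u = mul v f.

Definition protomodal : Prop :=
  forall (e s : S), idem e ->
    (exists u, in_Eq s (mul s e) u) /\
    (exists f, idem f /\ forall u, in_Eq s (mul s e) u <-> in_Sf f u).

Definition is_meet (E : S -> Prop) (e f g : S) : Prop :=
  E g /\ le_r g e /\ le_r g f /\
  (forall h, E h -> le_r h e -> le_r h f -> le_r h g).

Definition meet_semilattice (E : S -> Prop) : Prop :=
  (forall e, E e -> le_r e e) /\
  (forall e f, E e -> E f -> le_r e f -> le_r f e -> e = f) /\
  (forall e f g, E e -> E f -> E g -> le_r e f -> le_r f g -> le_r e g) /\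
  (forall e f, E e -> E f -> exists g, is_meet E e f g).

Definition is_dot (E : S -> Prop) (t e g : S) : Prop :=
  E g /\ forall s, mul (mul s t) e = mul s t <-> mul s g = s.

Definition inductive_left_E_monoid (one : S) (E : S -> Prop) : Prop :=
  E one /\
  (forall e, E e -> idem e) /\
  right_pre_reduced E /\
  meet_semilattice E /\
  (forall t e, E e -> exists g, is_dot E t e g) /\
  (forall s e f g, E e -> E f -> is_meet E e f g ->
     mul s e = s -> mul s f = s -> mul s g = s).

Definition integral (zero : S) : Prop :=
  forall s t, mul s t = zero -> s = zero \/ t = zero.

Definition rest0_carrier (zero : S) (E : S -> Prop) (p : S * S) : Prop :=
  E (fst p) /\ mul (fst p) (snd p) = snd p /\ (snd p = zero -> fst p = zero).

Definition rest0_mul (meet dot : S -> S -> S) (p q : S * S) : S * S :=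
  let g := meet (fst p) (dot (snd p) (fst q)) in
  (g, mul (mul g (snd p)) (snd q)).

Definition rest0_D (p : S * S) : S * S := (fst p, fst p).

End Generic.

(** T_X^0 : total functions X -> X with an adjoined zero (None) *)
Definition T0 (X : Type) : Type := option (X -> X).

Definition tmul (X : Type) (a b : T0 X) : T0 X :=
  match a, b with
  | Some f, Some g => Some (fun x => g (f x))
  | _, _ => None
  end.

Definition tone (X : Type) : T0 X := Some (fun x => x).

Definition tzero (X : Type) : T0 X := None.

Definition PT (X : Type) : Type := X -> option X.

Definition pmul (X : Type) (s t : PT X) : PT X :=
  fun x => match s x with Some y => t y | None => None end.

Definition pD (X : Type) (s : PT X) : PT X :=
  fun x => match s x with Some _ => Some x | None => None end.

(* Main.v *)
Require Import Defs.
From Stdlib Require Import Classical ClassicalEpsilon FunctionalExtensionality.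

Definition memE {X} (e : T0 X) (y : X) : Prop :=
  match e with Some f => f y = y | None => False end.

Lemma tassoc X (a b c : T0 X) : tmul a (tmul b c) = tmul (tmul a b) c.
Proof. destruct a, b, c; reflexivity. Qed.

Lemma L5 X (x0 : X) (k : X -> X) (g : T0 X) :
  tmul (Some k) g = Some k <-> forall x, memE g (k x).
Proof.
  destruct g as [γ|]; simpl; split.
  - intros H x. injection H as H. exact (f_equal (fun f => f x) H).
  - intros H. f_equal. extensionality x. apply H.
  - discriminate.
  - intros H. destruct (H x0).
Qed.

Lemma idem_fix X (e : X -> X) : idem (@tmul X) (Some e) -> forall x, e (e x) = e x.
Proof. intros H x. unfold idem in H. simpl in H. injection H as H. exact (f_equal (fun f => f x) H). Qed.

Lemma L1 X (x0 : X) (e f : T0 X) : idem (@tmul X) e -> idem (@tmul X) f ->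
  (le_r (@tmul X) e f <-> forall y, memE e y -> memE f y).
Proof.
  intros He Hf. unfold le_r. destruct e as [ε|]; destruct f as [φ|]; simpl.
  - split.
    + intros H y Hy. injection H as H. pose proof (f_equal (fun g => g y) H) as H'.
      simpl in H'. rewrite Hy in H'. congruence.
    + intros H. f_equal. extensionality x. symmetry. apply H. apply (idem_fix _ _ He).
  - split.
    + discriminate.
    + intros H. exfalso. apply (H (ε x0)). apply (idem_fix _ _ He).
  - split; [intros _ y [] | reflexivity].
  - split; [intros _ y [] | reflexivity].
Qed.

Lemma build_idem X (A : X -> Prop) : exists e : T0 X, idem (@tmul X) e /\ forall y, memE e y <-> A y.
Proof.
  destruct (classic (exists y, A y)) as [[y0 Hy0]|Hn].
  - exists (Some (fun x => if excluded_middle_informative (A x) then x else y0)).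
    split.
    + unfold idem; simpl; f_equal; extensionality x.
      destruct (excluded_middle_informative (A x)) as [Hx|Hx].
      * destruct (excluded_middle_informative (A x)); [reflexivity | contradiction].
      * destruct (excluded_middle_informative (A y0)); [reflexivity | contradiction].
    + intros y; simpl. destruct (excluded_middle_informative (A y)) as [Hy|Hy].
      * tauto.
      * split; [intros H; subst; contradiction | intros H; contradiction].
  - exists None. split; [reflexivity | intros y; simpl; split; [tauto | intros H; apply Hn; eauto]].
Qed.

Section WithE.
Variable X : Type.
Variable x0 : X.
Variable E : T0 X -> Prop.
Hypothesis HE : max_right_pre_reduced (@tmul X) E.

Lemma E_idem e : E e -> idem (@tmul X) e.
Proof. apply (proj1 HE). Qed.

Lemma E_rpr : right_pre_reduced (@tmul X) E.
Proof.
  intros e f He Hf H1 H2.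
  destruct (proj2 HE f (E_idem _ Hf)) as [g [[Hg1 Hg2] Hu]].
  transitivity g; [symmetry|]; apply Hu; split; auto.
  - split; auto.
  - split; unfold le_r; symmetry; apply (E_idem _ Hf).
Qed.

Lemma E_ext e f : E e -> E f -> (forall y, memE e y <-> memE f y) -> e = f.
Proof.
  intros He Hf H. apply E_rpr; auto.
  - apply (L1 _ x0 _ _ (E_idem _ He) (E_idem _ Hf)). firstorder.
  - apply (L1 _ x0 _ _ (E_idem _ Hf) (E_idem _ He)). firstorder.
Qed.

Lemma E_exists (A : X -> Prop) : exists e, E e /\ forall y, memE e y <-> A y.
Proof.
  destruct (build_idem _ A) as [i [Hi HiA]].
  destruct (proj2 HE i Hi) as [f [[Hf [S1 S2]] _]].
  exists f. split; auto. intros y. rewrite <- HiA. split.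
  - apply (L1 _ x0 _ _ (E_idem _ Hf) Hi); auto.
  - apply (L1 _ x0 _ _ Hi (E_idem _ Hf)); auto.
Qed.

Lemma L6 e f g : E e -> E f -> is_meet (@tmul X) E e f g ->
  forall y, memE g y <-> memE e y /\ memE f y.
Proof.
  intros He Hf [Hg [Hge [Hgf Hmax]]] y.
  destruct (E_exists (fun y => memE e y /\ memE f y)) as [m [Hm HmA]].
  split.
  - intros H. split.
    + apply (L1 _ x0 _ _ (E_idem _ Hg) (E_idem _ He)); auto.
    + apply (L1 _ x0 _ _ (E_idem _ Hg) (E_idem _ Hf)); auto.
  - intros H. apply HmA in H.
    revert H. apply (L1 _ x0 _ _ (E_idem _ Hm) (E_idem _ Hg)). apply Hmax; auto.
    + apply (L1 _ x0 _ _ (E_idem _ Hm) (E_idem _ He)). firstorder.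
    + apply (L1 _ x0 _ _ (E_idem _ Hm) (E_idem _ Hf)). firstorder.
Qed.

Definition dotP (t e : T0 X) (y : X) : Prop :=
  match t with None => True | Some h => memE e (h y) end.

Lemma L4 t e d : is_dot (@tmul X) E t e d -> forall y, memE d y <-> dotP t e y.
Proof.
  intros [Hd Hs] y. specialize (Hs (Some (fun _ => y))).
  rewrite (L5 _ x0) in Hs.
  destruct t as [h|].
  - change (tmul (Some (fun _ => h y)) e = Some (fun _ => h y) <-> (X -> memE d y)) in Hs.
    rewrite (L5 _ x0 (fun _ => h y)) in Hs. simpl. split.
    + intros H. apply Hs; auto.
    + intros H. apply Hs; auto.
  - simpl in *. split; auto. intros _. apply Hs; auto.
Qed.

End WithE.

Lemma Sf_iff X (f u : T0 X) : idem (@tmul X) f -> ((exists v, u = tmul v f) <-> tmul u f = u).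
Proof.
  intros Hf. split.
  - intros [v ->]. rewrite <- tassoc. unfold idem in Hf. rewrite Hf. reflexivity.
  - intros H. exists u. auto.
Qed.

Lemma proto X (x0 : X) : protomodal (@tmul X).
Proof.
  intros e s He. split.
  - exists None. reflexivity.
  - destruct (build_idem _ (dotP X s e)) as [f [Hf HfA]].
    exists f. split; auto. intros u. unfold in_Eq, in_Sf.
    rewrite (Sf_iff _ f u Hf).
    rewrite tassoc.
    destruct u as [k|]; [|simpl; tauto].
    rewrite (L5 _ x0 k f).
    destruct s as [h|].
    + change (Some (fun x => h (k x)) = tmul (Some (fun x => h (k x))) e <-> (forall x, memE f (k x))).
      split.
      * intros H x. apply HfA. simpl. symmetry in H. rewrite (L5 _ x0) in H. apply H.
      * intros H. symmetry. apply (L5 _ x0). intros x. apply HfA, H.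
    + simpl. split; auto. intros _ x. apply HfA. exact I.
Qed.

Lemma Eone X (E : T0 X -> Prop) (HE : max_right_pre_reduced (@tmul X) E) : E (tone X).
Proof.
  destruct (proj2 HE (tone X) eq_refl) as [f [[Hf [S1 S2]] _]].
  unfold le_r in S2. destruct f as [φ|]; simpl in S2; [|discriminate].
  rewrite S2. exact Hf.
Qed.

Lemma Ezero X (E : T0 X -> Prop) (HE : max_right_pre_reduced (@tmul X) E) : E (tzero X).
Proof.
  destruct (proj2 HE (tzero X) eq_refl) as [f [[Hf [S1 S2]] _]].
  unfold le_r in S1. destruct f as [φ|]; simpl in S1; [discriminate|]. exact Hf.
Qed.

Lemma dot_spec X (x0 : X) (E : T0 X -> Prop) t e g :
  E g -> (forall y, memE g y <-> dotP X t e y) -> is_dot (@tmul X) E t e g.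
Proof.
  intros Hg HgA. split; auto. intros s.
  destruct s as [k|]; [|simpl; tauto].
  rewrite (L5 _ x0 k g).
  destruct t as [h|].
  - change (tmul (Some (fun x => h (k x))) e = Some (fun x => h (k x)) <-> (forall x, memE g (k x))).
    rewrite (L5 _ x0). split; intros H x; [apply HgA, H | apply HgA, H].
  - simpl. split; auto. intros _ x. apply HgA. exact I.
Qed.

Lemma ind X (x0 : X) (E : T0 X -> Prop) (HE : max_right_pre_reduced (@tmul X) E) :
  inductive_left_E_monoid (@tmul X) (tone X) E.
Proof.
  split; [apply Eone; auto|].
  split; [apply (proj1 HE)|].
  split; [apply E_rpr; auto|].
  split.
  { split; [|split; [|split]].
    - intros e He. unfold le_r. symmetry. apply (E_idem _ _ HE _ He).
    - intros e f He Hf H1 H2. apply (E_rpr _ _ HE); auto.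
    - intros e f g _ _ _ H1 H2. unfold le_r in *.
      transitivity (tmul e f); auto. rewrite H2 at 1. rewrite tassoc, <- H1. reflexivity.
    - intros e f He Hf.
      destruct (E_exists _ x0 _ HE (fun y => memE e y /\ memE f y)) as [m [Hm HmA]].
      exists m. split; auto.
      pose proof (E_idem _ _ HE _ He) as Ie. pose proof (E_idem _ _ HE _ Hf) as If.
      pose proof (E_idem _ _ HE _ Hm) as Im.
      split; [|split].
      + apply (L1 _ x0 _ _ Im Ie). firstorder.
      + apply (L1 _ x0 _ _ Im If). firstorder.
      + intros h Hh H1 H2. pose proof (E_idem _ _ HE _ Hh) as Ih.
        apply (L1 _ x0 _ _ Ih Im). intros y Hy. apply HmA. split.
        * revert Hy. apply (L1 _ x0 _ _ Ih Ie); auto.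
        * revert Hy. apply (L1 _ x0 _ _ Ih If); auto. }
  split.
  - intros t e He.
    destruct (E_exists _ x0 _ HE (dotP X t e)) as [g [Hg HgA]].
    exists g. apply dot_spec; auto.
  - intros s e f g He Hf Hm H1 H2.
    destruct s as [k|]; [|reflexivity].
    rewrite (L5 _ x0) in *. intros x. apply (L6 _ x0 _ HE _ _ _ He Hf Hm). auto.
Qed.

Lemma integ X : integral (@tmul X) (tzero X).
Proof. intros [s|] [t|]; simpl; auto; discriminate. Qed.

Definition domP X (a : PT X) (y : X) : Prop := exists z, a y = Some z.
Definition sOf X (x0 : X) (a : PT X) (e : T0 X) : T0 X :=
  match e with None => None
  | Some r => Some (fun x => match a (r x) with Some z => z | None => x0 end) end.

Lemma iso X (x0 : X) (E : T0 X -> Prop) (HE : max_right_pre_reduced (@tmul X) E)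
  (meet dot : T0 X -> T0 X -> T0 X)
  (Hm : forall e f, E e -> E f -> is_meet (@tmul X) E e f (meet e f))
  (Hd : forall t e, E e -> is_dot (@tmul X) E t e (dot t e)) :
       exists phi : PT X -> T0 X * T0 X,
         (forall a, rest0_carrier (@tmul X) (tzero X) E (phi a)) /\
         (forall a b, phi a = phi b -> a = b) /\
         (forall p, rest0_carrier (@tmul X) (tzero X) E p -> exists a, phi a = p) /\
         (forall a b, phi (pmul a b) = rest0_mul (@tmul X) meet dot (phi a) (phi b)) /\
         (forall a, phi (pD a) = rest0_D (phi a)).
Proof.
  assert (Hc : forall A : X -> Prop, {e | E e /\ forall y, memE e y <-> A y}).
  { intros A. apply constructive_indefinite_description. apply (E_exists _ x0 _ HE). }
  set (eA := fun A => proj1_sig (Hc A)).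
  assert (HeA : forall A, E (eA A) /\ forall y, memE (eA A) y <-> A y)
    by (intros A; exact (proj2_sig (Hc A))).
  clearbody eA.
  exists (fun a => (eA (domP X a), sOf X x0 a (eA (domP X a)))).
  split; [|split; [|split; [|split]]].
  - intros a. destruct (HeA (domP X a)) as [E1 M1]. revert E1 M1.
    destruct (eA (domP X a)) as [r|]; intros E1 M1; unfold rest0_carrier; simpl.
    + split; auto. split; [|discriminate]. f_equal. extensionality x.
      rewrite (idem_fix _ _ (E_idem _ _ HE _ E1)). reflexivity.
    + auto.
  - intros a b H. injection H as H1 H2. extensionality y.
    destruct (HeA (domP X a)) as [Ea Ma]. destruct (HeA (domP X b)) as [Eb Mb].
    rewrite <- H1 in Mb, H2. revert Ea Ma Mb H2.
    destruct (eA (domP X a)) as [r|]; intros Ea Ma Mb H2.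
    + case_eq (a y); [intros z Hz | intros Hz]; case_eq (b y); [intros w Hw| intros Hw| intros w Hw| intros Hw].
      * assert (Hr : r y = y) by (apply Ma; exists z; auto).
        simpl in H2. injection H2 as H2. pose proof (f_equal (fun f => f y) H2) as H3.
        simpl in H3. rewrite Hr, Hz, Hw in H3. congruence.
      * exfalso. assert (Hb : domP X b y) by (apply Mb, Ma; exists z; auto).
        destruct Hb as [w Hw']. congruence.
      * exfalso. assert (Ha : domP X a y) by (apply Ma, Mb; exists w; auto).
        destruct Ha as [z Hz']. congruence.
      * reflexivity.
    + case_eq (a y); [intros z Hz | intros Hz].
      * exfalso. apply (Ma y). exists z; auto.
      * case_eq (b y); [intros w Hw | intros Hw]; auto.
        exfalso. apply (Mb y). exists w; auto.
  - intros [e s] [He [Hes Hz]]. simpl in *.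
    destruct e as [r|].
    + destruct s as [σ|]; [| exfalso; specialize (Hz eq_refl); discriminate].
      pose proof (idem_fix _ _ (E_idem _ _ HE _ He)) as Ir.
      simpl in Hes. injection Hes as Hes.
      assert (Hs : forall x, σ (r x) = σ x) by (intros x; exact (f_equal (fun f => f x) Hes)).
      exists (fun y => if excluded_middle_informative (r y = y) then Some (σ y) else None).
      destruct (HeA (domP X (fun y => if excluded_middle_informative (r y = y) then Some (σ y) else None))) as [E1 M1].
      assert (Heq : eA (domP X (fun y => if excluded_middle_informative (r y = y) then Some (σ y) else None)) = Some r).
      { apply (E_ext _ x0 _ HE); auto. intros y. rewrite M1. simpl. unfold domP.
        destruct (excluded_middle_informative (r y = y)) as [Hy|Hy]; split; intros H; eauto;
          try (destruct H; discriminate); contradiction. }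
      rewrite Heq. simpl. f_equal. f_equal. extensionality x.
      destruct (excluded_middle_informative (r (r x) = r x)) as [Hy|Hy]; [apply Hs | exfalso; apply Hy, Ir].
    + simpl in Hes. subst s. exists (fun _ => None).
      destruct (HeA (domP X (fun _ => None))) as [E1 M1].
      assert (Heq : eA (domP X (fun _ : X => None)) = None).
      { apply (E_ext _ x0 _ HE); auto.
        intros y. rewrite M1. simpl. unfold domP. split; [intros [z H]; discriminate | tauto]. }
      rewrite Heq. reflexivity.
  - intros a b. unfold rest0_mul. cbn [fst snd].
    destruct (HeA (domP X a)) as [Ea Ma]. destruct (HeA (domP X b)) as [Eb Mb].
    destruct (HeA (domP X (pmul a b))) as [Eab Mab].
    set (ea := eA (domP X a)) in *. set (eb := eA (domP X b)) in *.
    set (eab := eA (domP X (pmul a b))) in *.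
    clearbody ea eb eab.
    assert (Key : forall y, memE ea y /\ dotP X (sOf X x0 a ea) eb y <-> domP X (pmul a b) y).
    { intros y. destruct ea as [r|]; simpl.
      - split.
        + intros [Hr Hd']. assert (Ha : domP X a y) by (apply Ma; exact Hr).
          destruct Ha as [z Hz]. rewrite Hr, Hz in Hd'. apply Mb in Hd'.
          destruct Hd' as [w Hw]. exists w. unfold pmul. rewrite Hz. exact Hw.
        + intros [w Hw]. unfold pmul in Hw. case_eq (a y); [intros z Hz | intros Hz];
            rewrite Hz in Hw; [|discriminate].
          assert (Hr : r y = y) by (apply Ma; exists z; exact Hz).
          split; auto. rewrite Hr, Hz. apply Mb. exists w; exact Hw.
      - split; [tauto|]. intros [w Hw]. unfold pmul in Hw. case_eq (a y); [intros z Hz | intros Hz];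
          rewrite Hz in Hw; [|discriminate]. exfalso; apply (proj2 (Ma y)); exists z; exact Hz. }
    assert (Hg : meet ea (dot (sOf X x0 a ea) eb) = eab).
    { pose proof (Hd (sOf X x0 a ea) eb Eb) as Hdd.
      pose proof (Hm ea _ Ea (proj1 Hdd)) as Hmm.
      apply (E_ext _ x0 _ HE); auto. apply (proj1 Hmm).
      intros y. rewrite (L6 _ x0 _ HE _ _ _ Ea (proj1 Hdd) Hmm y).
      rewrite (L4 _ x0 _ _ _ _ Hdd y). rewrite Key. symmetry. apply Mab. }
    rewrite Hg. f_equal.
    destruct eab as [r|]; [|reflexivity].
    pose proof (idem_fix _ _ (E_idem _ _ HE _ Eab)) as Ir.
    assert (Hx : forall x, exists z w, a (r x) = Some z /\ b z = Some w).
    { intros x. assert (H : domP X (pmul a b) (r x)) by (apply Mab; apply Ir).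
      destruct H as [w Hw]. unfold pmul in Hw. case_eq (a (r x)); [intros z Hz | intros Hz];
        rewrite Hz in Hw; [|discriminate]. eauto. }
    destruct ea as [ra|]; [| destruct (Hx x0) as [z [w [Hz _]]]; exfalso; apply (Ma (r x0)); exists z; exact Hz].
    destruct eb as [rb|]; [| destruct (Hx x0) as [z [w [_ Hw]]]; exfalso; apply (Mb z); exists w; exact Hw].
    simpl. f_equal. extensionality x. destruct (Hx x) as [z [w [Hz Hw]]].
    assert (Hra : ra (r x) = r x) by (apply Ma; exists z; exact Hz).
    assert (Hrb : rb z = z) by (apply Mb; exists w; exact Hw).
    unfold pmul. rewrite Hra, Hz, Hrb, Hw. reflexivity.
  - intros a. unfold rest0_D. cbn [fst snd].
    destruct (HeA (domP X a)) as [Ea Ma]. destruct (HeA (domP X (pD a))) as [Eb Mb].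
    assert (Heq : eA (domP X (pD a)) = eA (domP X a)).
    { apply (E_ext _ x0 _ HE); auto. intros y. rewrite Ma, Mb. unfold domP, pD.
      destruct (a y); split; intros [z H]; try discriminate; eauto. }
    rewrite Heq. set (ea := eA (domP X a)) in *. clearbody ea. f_equal.
    destruct ea as [r|]; [|reflexivity]. simpl. f_equal. extensionality x.
    pose proof (idem_fix _ _ (E_idem _ _ HE _ Ea)) as Ir.
    assert (H : domP X a (r x)) by (apply Ma; apply Ir). destruct H as [z Hz].
    unfold pD. rewrite Hz. reflexivity.
Qed.

Theorem theorem7p1 (X : Type) (HX : inhabited X) :
  protomodal (@tmul X) /\
  forall E : T0 X -> Prop,
    max_right_pre_reduced (@tmul X) E ->
    inductive_left_E_monoid (@tmul X) (tone X) E /\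
    integral (@tmul X) (tzero X) /\
    E (tzero X) /\
    (forall meet dot : T0 X -> T0 X -> T0 X,
       (forall e f, E e -> E f -> is_meet (@tmul X) E e f (meet e f)) ->
       (forall t e, E e -> is_dot (@tmul X) E t e (dot t e)) ->
       exists phi : PT X -> T0 X * T0 X,
         (forall a, rest0_carrier (@tmul X) (tzero X) E (phi a)) /\
         (forall a b, phi a = phi b -> a = b) /\
         (forall p, rest0_carrier (@tmul X) (tzero X) E p -> exists a, phi a = p) /\
         (forall a b, phi (pmul a b) = rest0_mul (@tmul X) meet dot (phi a) (phi b)) /\
         (forall a, phi (pD a) = rest0_D (phi a))).
Proof.
  destruct HX as [x0]. split; [apply (proto _ x0)|].
  intros E HE. split; [apply (ind _ x0 _ HE)|]. split; [apply integ|].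
  split; [apply Ezero; auto|]. intros meet dot Hm Hd. apply (iso _ x0 _ HE); auto.
Qed.
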